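(* Let $m=p_1^{\alpha_1}p_2^{\alpha_2}$, where $p_1,p_2>2$ are distinct primes and $\alpha_1,\alpha_2$ are positive integers. Let $t=\mathrm{ord}_m(2)$ and let $\gamma\in\mathbb{F}_{2^t}^*$ be a primitive $m$th root of unity. Then every $S_m$-decoding polynomial has at least $3$ monomials (i.e. at least 3 nonzero coefficients).
   Context: $\mathrm{ord}_m(2)$ is the multiplicative order of $2$ modulo $m$. The canonical set of $m$ is $S_m=\{s_{01},s_{10},s_{11}\}\subseteq\mathbb{Z}_m$, where for $\sigma=(\sigma_1,\sigma_2)\in\{0,1\}^2\setminus\{(0,0)\}$, $s_\sigma$ is the unique element of $\mathbb{Z}_m$ with $s_\sigma\equiv\sigma_1 \pmod{p_1^{\alpha_1}}$ and $s_\sigma\equiv \sigma_2\pmod{p_2^{\alpha_2}}$ (so $s_{11}=1$). An $S_m$-decoding polynomial is a polynomial $P(X)\in\mathbb{F}_{2^t}[X]$ such that $P(\gamma^s)=0$ for every $s\in S_m$ and $P(\gamma^0)=P(1)=1$. *)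

(* Defs.v *)
From mathcomp Require Import all_boot all_order all_algebra all_field.
Set Implicit Arguments. Unset Strict Implicit. Unset Printing Implicit Defensive.
Import GRing.Theory.
Local Open Scope ring_scope.

Definition is_mult_order (m a t : nat) : Prop :=
  [/\ (0 < t)%N, (a ^ t = 1 %[mod m])%N &
      forall k : nat, (0 < k)%N -> (a ^ k = 1 %[mod m])%N -> (t <= k)%N].

(* s_sigma : the unique element of Z_m (m = q1 * q2, coprime) with
   s = sigma1 mod q1 and s = sigma2 mod q2, represented in [0, m). *)
Definition s_sigma (q1 q2 : nat) (sig1 sig2 : bool) : nat :=
  (chinese q1 q2 sig1 sig2 %% (q1 * q2))%N.

Definition canonical_set (p1 a1 p2 a2 : nat) : seq nat :=
  [:: s_sigma (p1 ^ a1) (p2 ^ a2) false true;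
      s_sigma (p1 ^ a1) (p2 ^ a2) true false;
      s_sigma (p1 ^ a1) (p2 ^ a2) true true].

Definition decoding_poly (F : fieldType) (gamma : F) (S : seq nat) (P : {poly F}) : Prop :=
  (forall s, s \in S -> P.[gamma ^+ s] = 0) /\ P.[1] = 1.

Definition num_monomials (F : fieldType) (P : {poly F}) : nat :=
  count (fun c => c != 0) (polyseq P).

(* Main.v *)
Require Import Defs.
From mathcomp Require Import all_boot all_order all_algebra all_field.
Local Open Scope ring_scope.
Import GRing.Theory.

Theorem lemma3 (p1 p2 a1 a2 m t : nat) (F : finFieldType) (gamma : F)
  (hp1 : prime p1) (hp2 : prime p2) (hp1g : (2 < p1)%N) (hp2g : (2 < p2)%N)
  (hneq : p1 != p2) (ha1 : (0 < a1)%N) (ha2 : (0 < a2)%N)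
  (hm : m = (p1 ^ a1 * p2 ^ a2)%N)
  (ht : is_mult_order m 2 t)
  (hF : #|F| = (2 ^ t)%N)
  (hgamma : m.-primitive_root gamma) :
  forall P : {poly F},
    decoding_poly gamma (canonical_set p1 a1 p2 a2) P -> (3 <= num_monomials P)%N.
Proof.
move=> P [hS h1].
have mpos : (0 < m)%N by rewrite hm muln_gt0 !expn_gt0 !prime_gt0.
have g0 : gamma != 0.
  apply/eqP=> g0; have := prim_expr_order hgamma.
  by rewrite g0 expr0n eqn0Ngt mpos /= => /eqP; rewrite eq_sym oner_eq0.
set s01 := s_sigma (p1 ^ a1) (p2 ^ a2) false true.
set s10 := s_sigma (p1 ^ a1) (p2 ^ a2) true false.
set s11 := s_sigma (p1 ^ a1) (p2 ^ a2) true true.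
have key : forall d, gamma ^+ (s01 * d) * gamma ^+ (s10 * d) = gamma ^+ (s11 * d).
  move=> d; rewrite -exprD -mulnDl -(prim_expr_mod hgamma) -[in RHS](prim_expr_mod hgamma).
  congr (_ ^+ _); rewrite /s01 /s10 /s11 /s_sigma -hm.
  rewrite -modnMml modnDm modnMml /chinese /= !mul0n !mul1n addn0 add0n modnMml addnC //.
have e01 : P.[gamma ^+ s01] = 0 by apply: hS; rewrite !inE eqxx.
have e10 : P.[gamma ^+ s10] = 0 by apply: hS; rewrite !inE eqxx orbT.
have e11 : P.[gamma ^+ s11] = 0 by apply: hS; rewrite !inE eqxx !orbT.
pose I := [seq i <- iota 0 (size P) | P`_i != 0].
have hcnt : count (fun c => c != 0) (polyseq P) = size I.
  by rewrite size_filter -{1}(mkseq_nth 0 P) /mkseq count_map.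
have hev x : P.[x] = \sum_(i <- I) P`_i * x ^+ i.
  rewrite horner_coef big_filter [RHS]big_rmcond.
    have -> : iota 0 (size P) = index_iota 0 (size P) by rewrite /index_iota subn0.
    by rewrite big_mkord.
  by move=> i /negPn/eqP ->; rewrite mul0r.
have hsort : sorted ltn I by apply: sorted_filter; [exact: ltn_trans| exact: iota_ltn_sorted].
have hnz i : i \in I -> P`_i != 0 by rewrite mem_filter => /andP[].
suff H : (3 <= size I)%N by rewrite -hcnt in H.
clear hcnt; clearbody I.
case: I hev hsort hnz => [|i [|j [|k r]]] // hev hsort hnz.
- by move: h1; rewrite hev big_nil => /eqP; rewrite eq_sym oner_eq0.
- move: e11 h1; rewrite !hev !big_cons !big_nil !addr0 expr1n mulr1 => /eqP.
  rewrite mulf_eq0 !expf_eq0 (negPf g0) !andbF orbF => /eqP -> /eqP.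
  by rewrite eq_sym oner_eq0.
- have ltij : (i < j)%N by move: hsort => /= /andP[].
  have ha : P`_i != 0 by apply: hnz; rewrite inE eqxx.
  have hb : P`_j != 0 by apply: hnz; rewrite !inE eqxx orbT.
  set a := P`_i in ha *; set b := P`_j in hb *.
  have hab : a + b = 1 by move: h1; rewrite hev !big_cons big_nil addr0 !expr1n !mulr1.
  have hs s : P.[gamma ^+ s] = 0 -> b * gamma ^+ (s * (j - i)) = - a.
    move=> e.
    have : (gamma ^+ s) ^+ i * (a + b * (gamma ^+ s) ^+ (j - i)) = 0.
      rewrite mulrDr mulrC [_ * (b * _)]mulrCA -exprD subnKC ?(ltnW ltij) //.
      by move: e; rewrite hev !big_cons big_nil addr0.
    move/eqP; rewrite mulf_eq0 expf_eq0 expf_eq0 (negPf g0) !andbF /= addrC addr_eq0 -exprM.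
    by move/eqP.
  have := key (j - i)%N; move: (hs _ e01) (hs _ e10) (hs _ e11) => h01 h10 h11 hk.
  have : b * (b * gamma ^+ (s11 * (j - i))%N) = a * a.
    by rewrite -hk mulrA mulrACA h01 h10 mulrNN.
  rewrite h11 mulrN -[a * a]opprK => /oppr_inj.
  move/eqP; rewrite -addr_eq0 -mulrDl addrC hab mul1r.
  by move: ha => /negPf ->.
Qed.
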